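(* Let $X$ be a finite set and let $\tau$ be a slim collection of subsets of $X$, each of size at least 3. Then the collection $\mathcal{P}$ of all non-empty subsets $\tau'\subseteq\tau$ with ${\rm exc}'(\tau')=0$ is a patchwork: whenever $\tau_1,\tau_2\in\mathcal{P}$ and $\tau_1\cap\tau_2\neq\emptyset$, both $\tau_1\cap\tau_2$ and $\tau_1\cup\tau_2$ belong to $\mathcal{P}$.
   Context: $L(\tau)=\bigcup_{s\in\tau}s$. For a non-empty collection $\tau'$ of subsets of $X$ each of size at least 3, ${\rm exc}'(\tau')=|L(\tau')|-2-\sum_{s\in\tau'}(|s|-2)$. $\tau$ is slim if ${\rm exc}'(\tau')\ge0$ for every non-empty $\tau'\subseteq\tau$. *)

(* Defs.v *)
From mathcomp Require Import all_boot all_order all_algebra.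
Set Implicit Arguments. Unset Strict Implicit. Unset Printing Implicit Defensive.
Import GRing.Theory Num.Theory.
Local Open Scope ring_scope.

Definition Lset (X : finType) (tau : {set {set X}}) : {set X} :=
  \bigcup_(s in tau) s.

Definition exc' (X : finType) (tau : {set {set X}}) : int :=
  (#|Lset tau|%:Z - 2) - \sum_(s in tau) (#|s|%:Z - 2).

Definition all_big (X : finType) (tau : {set {set X}}) : Prop :=
  forall s, s \in tau -> (3 <= #|s|)%N.

Definition slim (X : finType) (tau : {set {set X}}) : Prop :=
  forall tau' : {set {set X}}, tau' \subset tau -> tau' != set0 -> 0 <= exc' tau'.

Definition Pcoll (X : finType) (tau : {set {set X}}) : {set {set {set X}}} :=
  [set tau' : {set {set X}} | (tau' \subset tau) && (tau' != set0) && (exc' tau' == 0)].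

Definition patchwork (X : finType) (P : {set {set {set X}}}) : Prop :=
  forall t1 t2, t1 \in P -> t2 \in P -> t1 :&: t2 != set0 ->
    (t1 :&: t2 \in P) /\ (t1 :|: t2 \in P).

(* Main.v *)
Require Import Defs.
From mathcomp Require Import all_boot all_order all_algebra.
From mathcomp Require Import zify.
Import GRing.Theory Num.Theory.

Section Aux.
Variable X : finType.
Local Open Scope ring_scope.

Lemma LsetU (t1 t2 : {set {set X}}) : Lset (t1 :|: t2) = Lset t1 :|: Lset t2.
Proof.
apply/setP => x; rewrite /Lset in_setU; apply/bigcupP/orP.
- by case=> s; rewrite in_setU => /orP [] Hs Hx; [left|right]; apply/bigcupP; exists s.
- by case=> /bigcupP [s Hs Hx]; exists s => //; rewrite in_setU Hs ?orbT.
Qed.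

Lemma LsetI (t1 t2 : {set {set X}}) : Lset (t1 :&: t2) \subset Lset t1 :&: Lset t2.
Proof.
apply/subsetP => x /bigcupP [s]; rewrite in_setI => /andP [H1 H2] Hx.
by rewrite in_setI; apply/andP; split; apply/bigcupP; exists s.
Qed.

Lemma sumUI (F : {set X} -> int) (t1 t2 : {set {set X}}) :
  \sum_(s in t1 :|: t2) F s + \sum_(s in t1 :&: t2) F s =
  \sum_(s in t1) F s + \sum_(s in t2) F s.
Proof.
rewrite (big_setID t1 (A := t1 :|: t2)) (big_setID t1 (A := t2)) /=.
have -> : (t1 :|: t2) :&: t1 = t1 by apply/setP=> s; rewrite !inE; case: (s \in t1); case: (s \in t2).
have -> : (t1 :|: t2) :\: t1 = t2 :\: t1 by apply/setP=> s; rewrite !inE; case: (s \in t1); case: (s \in t2).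
rewrite (setIC t2 t1).
set a := \sum_(i in t1) F i. set b := \sum_(i in t2 :\: t1) F i.
set c := \sum_(i in t1 :&: t2) F i.
lia.
Qed.

Lemma exc_UI (t1 t2 : {set {set X}}) :
  exc' (t1 :|: t2) + exc' (t1 :&: t2) <= exc' t1 + exc' t2.
Proof.
rewrite /exc'.
have HS := sumUI (fun s => #|s|%:Z - 2) t1 t2.
have HL : (#|Lset (t1 :|: t2)| + #|Lset (t1 :&: t2)| <= #|Lset t1| + #|Lset t2|)%N.
  rewrite LsetU -(cardsUI (Lset t1) (Lset t2)) leq_add2l; exact: subset_leq_card (LsetI t1 t2).
move: HS HL.
set a := \sum_(s in t1 :|: t2) _. set b := \sum_(s in t1 :&: t2) _.
set c := \sum_(s in t1) _. set d := \sum_(s in t2) _.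
move=> HS HL. lia.
Qed.
End Aux.

Theorem corollary3 (X : finType) (tau : {set {set X}}) :
  all_big tau -> slim tau -> patchwork (Pcoll tau).
Proof.
move=> _ Hs t1 t2; rewrite !inE => /andP [/andP [S1 N1] /eqP E1] /andP [/andP [S2 N2] /eqP E2] NI.
have SU : t1 :|: t2 \subset tau by rewrite subUset S1 S2.
have SI : t1 :&: t2 \subset tau by apply: subset_trans S1; apply: subsetIl.
have NU : t1 :|: t2 != set0.
  apply: contraNneq N1 => H; apply/eqP/setP => s; rewrite inE.
  by apply/negbTE; apply: contra_eqN H => Hs1; apply/eqP => /setP /(_ s); rewrite !inE Hs1.
have HU := Hs _ SU NU. have HI := Hs _ SI NI.
have H := @exc_UI _ t1 t2. rewrite E1 E2 in H.
rewrite SU SI NU NI /=. split; apply/eqP; lia.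
Qed.
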